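(* Let $p\ge5$ and let $\rho$ be the rightmost assignment on the white metallic tree. For every node $\nu$ of $\mathcal W_\rho$, the integer whose nzm-code is the nzm-code of $\nu$ followed by the digit $1$ (the successor of $\nu$) is a son of $\nu$ in $\mathcal W_\rho$, and no other son of $\nu$ in $\mathcal W_\rho$ has an nzm-code ending with $1$. Moreover, $\rho$ is the unique assignment $\alpha$ such that, for every node $\nu$, the successor of $\nu$ is a son of $\nu$ in $\mathcal W_\alpha$.
   Context: Fix $p\ge5$. Metallic numbers: $m_{-1}=0$, $m_0=1$, $m_{n+2}=(p-2)m_{n+1}-m_n$. With $x=p-2$, $d=p-3$, the nzm-code of a positive integer $n$ is the unique word $a_k\cdots a_0$ over $\{1,\dots,p-2\}$ with $n=\sum a_im_i$ containing no factor $x\,d^j\,x$ ($j\ge0$). White metallic tree under an assignment $\alpha$, $\mathcal W_\alpha$: nodes are the positive integers, each black or white; root $1$ is white; nodes are processed in increasing order, node $\nu$ receives $p-2$ sons if white and $p-3$ sons if black, namely the smallest integers not yet used, in increasing order; an assignment specifies for each node the position (leftmost $=1$) of its unique black son among its sons, other sons being white. The rightmost assignment $\rho$ always puts the black son at the last position. *)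

(* Defs.v *)
From mathcomp Require Import all_boot.
Set Implicit Arguments. Unset Strict Implicit. Unset Printing Implicit Defensive.

(* For p >= 5 the sequence is strictly increasing, so truncated nat
   subtraction never truncates. *)
Fixpoint metal (p n : nat) : nat :=
  match n with
  | 0 => 1
  | S n1 => match n1 with
            | 0 => p - 2
            | S n0 => (p - 2) * metal p n1 - metal p n0
            end
  end.

(* A word a_k ... a_0 is represented by the list [:: a_k; ...; a_0]
   (most significant digit first); its value is \sum_i a_i m_i. *)
Definition nzm_val (p : nat) (w : seq nat) : nat :=
  \sum_(i < size w) nth 0 (rev w) i * metal p i.

(* The forbidden factor x d^j x, with x = p-2, d = p-3. *)
Definition forbidden_factor (p j : nat) : seq nat :=
  (p - 2) :: rcons (nseq j (p - 3)) (p - 2).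

Definition is_nzm_word (p : nat) (w : seq nat) : Prop :=
  [/\ w != [::],
      all (fun a => 1 <= a <= p - 2) w
    & forall j, ~~ infix (forbidden_factor p j) w].

Definition nzm_code (p n : nat) (w : seq nat) : Prop :=
  is_nzm_word p w /\ nzm_val p w = n.

(* colour: true = white, false = black *)
Definition nsons (p : nat) (white : bool) : nat := if white then p - 2 else p - 3.

(* A position rule r: r nu c = position (leftmost = 1) of the black son of
   node nu, whose colour is c.  An assignment alpha : nat -> nat is the rule
   fun nu _ => alpha nu. *)
Definition asg (alpha : nat -> nat) : nat -> bool -> nat := fun nu _ => alpha nu.

(* wstate p r k = (colours, N) after processing nodes 1..k in increasing
   order: colours assigned so far (root 1 white) and N = smallest integer
   not yet used. *)
Fixpoint wstate (p : nat) (r : nat -> bool -> nat) (k : nat)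
  : (nat -> bool) * nat :=
  match k with
  | 0 => (fun _ => true, 2)
  | S k' =>
      let (col, N) := wstate p r k' in
      let c := nsons p (col k) in
      let b := N + r k (col k) - 1 in
      (fun n => if (N <= n) && (n < N + c) then n != b else col n, N + c)
  end.

Definition wcolor (p : nat) (r : nat -> bool -> nat) (n : nat) : bool :=
  (wstate p r n.-1).1 n.
Definition wfirst (p : nat) (r : nat -> bool -> nat) (n : nat) : nat :=
  (wstate p r n.-1).2.

Definition wson (p : nat) (r : nat -> bool -> nat) (nu s : nat) : Prop :=
  1 <= nu /\ wfirst p r nu <= s < wfirst p r nu + nsons p (wcolor p r nu).

Definition valid_assignment (p : nat) (alpha : nat -> nat) : Prop :=
  forall nu, 1 <= nu -> 1 <= alpha nu <= nsons p (wcolor p (asg alpha) nu).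

Definition rightmost_rule (p : nat) : nat -> bool -> nat := fun _ c => nsons p c.
Definition rho (p : nat) (nu : nat) : nat :=
  nsons p (wcolor p (rightmost_rule p) nu).

(* Main.v *)
Require Import Defs.
From mathcomp Require Import all_boot zify.
Set Implicit Arguments. Unset Strict Implicit. Unset Printing Implicit Defensive.

Section Codes.
Variable p : nat.
Hypothesis hp : 5 <= p.

Fixpoint danger (r : seq nat) : bool :=
  if r is a :: r' then (a == p-2) || ((a == p-3) && danger r') else false.
Definition maxd r := if danger r then p-3 else p-2.
Fixpoint valid (r : seq nat) : bool :=
  if r is a :: r' then valid r' && (1 <= a <= maxd r') else true.
Fixpoint incr (r : seq nat) : seq nat :=
  if r is a :: r' then (if a.+1 <= maxd r' then a.+1 :: r' else 1 :: incr r') else [:: 1].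
Fixpoint decr (r : seq nat) : seq nat :=
  match r with
  | [::] => [::]
  | a :: r' => if 2 <= a then a.-1 :: r' else
               if r' is [::] then [::] else maxd (decr r') :: decr r'
  end.
Fixpoint G k (r : seq nat) : nat :=
  if r is a :: r' then a * metal p k + G k.+1 r' else 0.
Definition ends1 (r : seq nat) : bool :=
  match r with 1 :: _ :: _ => true | _ => false end.

Lemma metalSS n : metal p n.+2 = (p-2) * metal p n.+1 - metal p n.
Proof. by []. Qed.

Lemma metal0 : metal p 0 = 1. Proof. by []. Qed.
Lemma metal1 : metal p 1 = p - 2. Proof. by []. Qed.
Local Arguments metal : simpl never.

Lemma metal_2 n : 2 * metal p n <= metal p n.+1.
Proof.
elim: n => [|n IH]; first by rewrite metal0 metal1; lia.
rewrite metalSS.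
have : 3 * metal p n.+1 <= (p-2) * metal p n.+1 by apply: leq_mul => //; lia.
lia.
Qed.

Lemma metal_rec n : metal p n.+2 + metal p n = (p-2) * metal p n.+1.
Proof.
rewrite metalSS.
have := metal_2 n.
have : 3 * metal p n.+1 <= (p-2) * metal p n.+1 by apply: leq_mul => //; lia.
lia.
Qed.

Lemma G_rec2 r k : G k.+2 r + G k r = (p-2) * G k.+1 r.
Proof.
elim: r k => [|a r IH] k /=; first by rewrite muln0.
have h1 := metal_rec k. have h2 := IH k.+1.
rewrite mulnDr mulnCA -h1 -h2 mulnDr. lia.
Qed.

Lemma G_mono r k : G k r <= G k.+1 r.
Proof.
elim: r k => [|a r IH] k //=.
have := metal_2 k. have := IH k.+1.
have : a * metal p k <= a * metal p k.+1 by apply: leq_mul => //; have := metal_2 k; lia.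
lia.
Qed.

Lemma S_cons a r : G 1 (a :: r) + G 0 r = (p-2) * G 0 (a :: r).
Proof.
rewrite /=. have := G_rec2 r 0. rewrite metal0 metal1 muln1 mulnDr. lia.
Qed.

Lemma V_cons a r : G 0 (a :: r) = a + G 1 r.
Proof. by rewrite /= metal0 muln1. Qed.

Lemma sum_G r k : \sum_(i < size r) nth 0 r i * metal p (i + k) = G k r.
Proof.
elim: r k => [|a r IH] k; first by rewrite big_ord0.
rewrite /= big_ord_recl /=. congr (_ + _).
rewrite -IH. apply: eq_bigr => i _. by rewrite add0n /bump leq0n add1n addSnnS.
Qed.

Lemma nzm_val_G r : nzm_val p (rev r) = G 0 r.
Proof. by rewrite /nzm_val revK size_rev -(sum_G r 0); apply: eq_bigr => i _; rewrite addn0. Qed.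


Lemma G_cons k a r : G k (a :: r) = a * metal p k + G k.+1 r. Proof. by []. Qed.
Lemma G_nil k : G k [::] = 0. Proof. by []. Qed.
Local Arguments G : simpl never.

Lemma maxd_bnd r : p - 3 <= maxd r <= p - 2.
Proof. rewrite /maxd; case: (danger r); lia. Qed.

Lemma incr_ne r : incr r != [::].
Proof. by case: r => //= a r; case: ifP. Qed.

Lemma valid_incr r : valid r -> valid (incr r).
Proof.
elim: r => [|a r IH] /=; first by move=> _; rewrite /maxd /=; lia.
move=> /andP [vr ha]; case: ifP => h /=.
  by rewrite vr /=; lia.
rewrite IH //=. have := maxd_bnd (incr r). lia.
Qed.

Lemma danger_cons a r : valid (a :: r) -> danger (a :: r) = (maxd r == a).
Proof.
move=> /= /andP [_]; rewrite /maxd; case: (danger r) => /=; 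
  rewrite ?andbT ?andbF ?orbF => h; apply/idP/idP => /eqP ?; apply/eqP; lia.
Qed.

Lemma VS_incr r : valid r ->
  G 0 (incr r) = (G 0 r).+1 /\ G 1 (incr r) = G 1 r + maxd r.
Proof.
elim: r => [|a r IH] /=.
  by move=> _; rewrite !G_cons !G_nil metal0 metal1 /maxd /=; lia.
move=> /andP [vr ha].
have dc' : danger (a :: r) = (maxd r == a) by apply: danger_cons; rewrite /= vr ha.
case: ifP => h.
- have S1 := S_cons a.+1 r. have S2 := S_cons a r. rewrite !V_cons in S1 S2.
  have -> : maxd (a :: r) = p - 2 by rewrite {1}/maxd dc'; case: eqP => //; lia.
  rewrite !V_cons; split; first lia.
  rewrite mulnDr in S1 S2. rewrite mulnSr in S1. lia.
- have ea : a = maxd r by lia.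
  have [IH1 IH2] := IH vr.
  have -> : maxd (a :: r) = p - 3 by rewrite {1}/maxd dc' ea eqxx.
  have S1 := S_cons 1 (incr r). have S2 := S_cons a r. rewrite !V_cons in S1 S2.
  rewrite IH1 IH2 in S1. rewrite !V_cons IH2; split; first lia.
  rewrite !mulnDr muln1 in S1 S2. rewrite -ea in S1.
  have := maxd_bnd r. lia.
Qed.

Lemma ends1_incr r : valid r -> ends1 (incr r) = danger r.
Proof.
case: r => [|a r] // v.
have dc' : danger (a :: r) = (maxd r == a) by apply: danger_cons.
rewrite dc'. case/andP: v => vr ha. rewrite [incr _]/=.
case: ifP => h.
- case: a ha h {dc'} => [|a] ha h; first by lia.
  by rewrite /=; apply/esym/eqP; lia.
- have := incr_ne r. case: (incr r) => //= b l _.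
  apply/esym/eqP; lia.
Qed.

Lemma decr_ok r : valid r -> r != [::] -> valid (decr r) /\ incr (decr r) = r.
Proof.
elim: r => [|a r IH] // v _.
have vr : valid r by case/andP: v.
have ha : 1 <= a <= maxd r by case/andP: v.
case h2: (2 <= a).
  have -> : decr (a :: r) = a.-1 :: r by rewrite /= h2.
  split; first by rewrite /= vr /=; lia.
  rewrite /= prednK; last by lia.
  by case: ifP => //; lia.
have a1 : a = 1 by lia. subst a.
case: r IH vr ha {v} => [|b r] IH vr ha //.
have [v1 i1] := IH vr isT.
have -> : decr [:: 1, b & r] = maxd (decr (b::r)) :: decr (b::r) by [].
move: (decr (b :: r)) v1 i1 => l v1 i1.
split; first by rewrite /= v1 /=; have := maxd_bnd l; lia.
by rewrite /= ltnn i1.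
Qed.

Lemma V_pos r : valid r -> G 0 r = 0 -> r = [::].
Proof. case: r => // a r /= /andP [_ ha]. rewrite G_cons metal0. lia. Qed.

Definition code n := iter n incr [::].

Lemma code_ok n : valid (code n) /\ G 0 (code n) = n.
Proof.
elim: n => [|n [v e]] //=. split; first exact: valid_incr.
by have [-> _] := VS_incr v; rewrite e.
Qed.

Lemma code_unique r : valid r -> r = code (G 0 r).
Proof.
move: {2}(G 0 r) (erefl (G 0 r)) => n; elim: n r => [|n IH] r e v.
  by rewrite (V_pos v e).
have rne : r != [::] by case: r e v.
have [vd id] := decr_ok v rne.
have [e1 _] := VS_incr vd. rewrite id in e1.
have ed : G 0 (decr r) = n by rewrite e1 in e; case: e.
rewrite -id (IH _ ed vd) ed. change (incr (code n)) with (code n.+1). by rewrite (code_ok n.+1).2.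
Qed.

Lemma rev_ff j : rev (forbidden_factor p j) = forbidden_factor p j.
Proof. by rewrite /forbidden_factor rev_cons rev_rcons rev_nseq. Qed.

Lemma danger_prefix r :
  danger r <-> exists j, prefix (rcons (nseq j (p-3)) (p-2)) r.
Proof.
elim: r => [|a r IH].
  by split => //; case => -[|j].
rewrite [danger _]/=. split.
- case/orP => [/eqP ->|/andP [/eqP -> /IH [j hj]]].
    by exists 0; rewrite /= eqxx prefix0s.
  by exists j.+1; rewrite /= eqxx hj.
- case => -[|j] /=.
    by rewrite prefix0s andbT => /eqP ->; rewrite eqxx.
  case/andP => /eqP <- hj. apply/orP; right; rewrite eqxx /=.
  by apply/IH; exists j.
Qed.

Lemma noinf_cons a r :
  (forall j, ~~ infix (forbidden_factor p j) (a :: r)) <->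
  (forall j, ~~ infix (forbidden_factor p j) r) /\ ~ (a = p-2 /\ danger r).
Proof.
split.
- move=> h; split.
    by move=> j; have := h j; rewrite infix_consl negb_or => /andP [].
  case=> ea /danger_prefix [j hj]. have := h j.
  by rewrite infix_consl /forbidden_factor /= ea eqxx hj.
- case=> h1 h2 j. rewrite infix_consl negb_or h1 andbT /forbidden_factor /=.
  apply/negP => /andP [/eqP ea hj]; apply: h2; split => //.
  by apply/danger_prefix; exists j.
Qed.

Lemma validE r : valid r <->
  all (fun a => 1 <= a <= p-2) r /\ forall j, ~~ infix (forbidden_factor p j) r.
Proof.
elim: r => [|a r IH].
  by split => // _; split => // j; rewrite /forbidden_factor.
rewrite noinf_cons /= . split.
- case/andP => /IH [h1 h2] ha. rewrite h1 andbT. have := maxd_bnd r.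
  split; first lia. split => // -[ea dr]. move: ha; rewrite /maxd dr. lia.
- case=> /andP [ha h1] [h2 h3]. have -> : valid r by apply/IH.
  rewrite /= /maxd. case: ifP => dr; last by [].
  have : a != p - 2 by apply/eqP => ea; apply: h3.
  move/eqP. lia.
Qed.

Lemma word_valid w : is_nzm_word p w <-> w != [::] /\ valid (rev w).
Proof.
split.
- case=> h1 h2 h3; split => //. apply/validE; rewrite all_rev; split => // j.
  by rewrite -rev_ff infix_rev.
- case=> h1 /validE [h2 h3]; split => //; first by rewrite -all_rev.
  by move=> j; rewrite -infix_rev rev_ff.
Qed.

End Codes.
Definition NN p r k := (wstate p r k).2.
Definition CC p r k := (wstate p r k).1.

Section Tree.
Variable p : nat.
Hypothesis hp : 5 <= p.

Lemma nsons_ge2 c : 2 <= nsons p c.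
Proof. rewrite /nsons; case: c; lia. Qed.

Lemma nsons_le c : nsons p c <= p - 2.
Proof. rewrite /nsons; case: c; lia. Qed.

Variable r : nat -> bool -> nat.

Lemma NS k : NN p r k.+1 = NN p r k + nsons p (CC p r k k.+1).
Proof. rewrite /NN /CC /=. by case: (wstate p r k). Qed.

Lemma CS k n : CC p r k.+1 n =
  if (NN p r k <= n) && (n < NN p r k + nsons p (CC p r k k.+1))
  then n != NN p r k + r k.+1 (CC p r k k.+1) - 1 else CC p r k n.
Proof. rewrite /NN /CC /=. by case: (wstate p r k). Qed.

Lemma N0 : NN p r 0 = 2. Proof. by []. Qed.
Lemma C0 n : CC p r 0 n = true. Proof. by []. Qed.

Lemma N_ge k : 2 * k + 2 <= NN p r k.
Proof. elim: k => [|k IH]; first by rewrite N0. rewrite NS. have := nsons_ge2 (CC p r k k.+1). lia. Qed.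

Lemma N_ltS i m : NN p r i < NN p r (i + m.+1).
Proof.
elim: m => [|m IH]; first by rewrite addn1 NS; have := nsons_ge2 (CC p r i i.+1); lia.
rewrite addnS NS. lia.
Qed.

Lemma N_lt i j : i < j -> NN p r i < NN p r j.
Proof. move=> h. have -> : j = i + (j - i).-1.+1 by lia. exact: N_ltS. Qed.

Lemma N_le i j : i <= j -> NN p r i <= NN p r j.
Proof. rewrite leq_eqVlt => /orP [/eqP -> //|/N_lt]; lia. Qed.

Lemma N_lt_inv i j : NN p r i < NN p r j -> i < j.
Proof. move=> h; case: (ltnP i j) => // /N_le; lia. Qed.

Lemma C_high k n : NN p r k <= n -> CC p r k n = true.
Proof.
elim: k => [|k IH] //. rewrite NS CS => h.
case: andP => [[_ h3]|_]; first lia.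
apply: IH. lia.
Qed.

Lemma C_final k m n : n < NN p r k -> CC p r (k + m) n = CC p r k n.
Proof.
move=> h; elim: m => [|m IH]; first by rewrite addn0.
rewrite addnS CS IH.
have := N_le (leq_addr m k). rewrite addnC.
by move=> h2; case: andP => // -[h3 _]; lia.
Qed.

Lemma C_fin K n : 1 <= n -> n.-1 <= K -> CC p r K n = CC p r n.-1 n.
Proof.
move=> h1 h2. have -> : K = n.-1 + (K - n.-1) by lia.
apply: C_final. have := N_ge n.-1. lia.
Qed.

Lemma block j n : 1 <= j -> NN p r j.-1 <= n < NN p r j ->
  CC p r n.-1 n = (n != NN p r j.-1 + r j (CC p r j.-1 j) - 1).
Proof.
move=> hj /andP [h1 h2].
have hjn : j <= n.-1 by have := N_ge j.-1; lia.
have -> : n.-1 = j + (n.-1 - j) by lia.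
rewrite C_final //.
have e : j = j.-1.+1 by lia.
rewrite {1}e CS -NS -e h2 h1 /=. done.
Qed.

Lemma block_exists n : 2 <= n -> exists j, 1 <= j /\ NN p r j.-1 <= n < NN p r j.
Proof.
move=> hn.
suff H : forall K, n < NN p r K -> exists j, 1 <= j /\ NN p r j.-1 <= n < NN p r j.
  by apply: (H n); have := N_ge n; lia.
elim => [|K IH]; first by rewrite N0; lia.
case: (ltnP n (NN p r K)) => h; first by move=> _; exact: IH.
by move=> h2; exists K.+1; rewrite /= h h2.
Qed.

End Tree.

Lemma agree p (r1 r2 : nat -> bool -> nat) K :
  (forall i, 1 <= i <= K -> r1 i (CC p r2 i.-1 i) = r2 i (CC p r2 i.-1 i)) ->
  (forall n, CC p r1 K n = CC p r2 K n) /\ NN p r1 K = NN p r2 K.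
Proof.
elim: K => [|K IH] h; first by [].
have [IH1 IH2] : (forall n, CC p r1 K n = CC p r2 K n) /\ NN p r1 K = NN p r2 K.
  by apply: IH => i hi; apply: h; lia.
have hK := h K.+1 (leqnn _); rewrite /= in hK.
split; last by rewrite !NS IH1 IH2.
by move=> n; rewrite !CS IH1 IH2 hK; case: ifP => // _; rewrite IH1.
Qed.

Lemma shift p (r1 r2 : nat -> bool -> nat) k B m :
  5 <= p -> k + m < B -> B <= NN p r1 k ->
  (forall i, i < B -> CC p r1 k i = CC p r2 k i) -> NN p r1 k = NN p r2 k ->
  NN p r1 (k + m) = NN p r2 (k + m).
Proof.
move=> hp hB hN hC hN2. elim: m hB => [|m IH] hB; first by rewrite addn0.
rewrite addnS !NS IH; last by lia.
have e1 : CC p r1 (k+m) (k+m).+1 = CC p r1 k (k+m).+1 by apply: C_final => //; lia.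
have e2 : CC p r2 (k+m) (k+m).+1 = CC p r2 k (k+m).+1 by apply: C_final => //; lia.
by rewrite e1 e2 hC //; lia.
Qed.

Definition Rm p := rightmost_rule p.

Section Main.
Variable p : nat.
Hypothesis hp : 5 <= p.

Lemma black_iff n : 1 <= n ->
  (CC p (Rm p) n.-1 n = false <-> exists j, 1 <= j /\ NN p (Rm p) j = n.+1).
Proof.
move=> hn. case: (ltnP n 2) => hn2.
  have -> : n = 1 by lia. split => // -[j [hj e]].
  have := N_ge hp (Rm p) j. lia.
have [j [hj hb]] := block_exists hp (Rm p) hn2.
rewrite (block hp hj hb).
have e : NN p (Rm p) j = NN p (Rm p) j.-1 + nsons p (CC p (Rm p) j.-1 j).
  by have := NS p (Rm p) j.-1; rewrite prednK.
change (Rm p j (CC p (Rm p) j.-1 j)) with (nsons p (CC p (Rm p) j.-1 j)). rewrite -e.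
split.
  move/negbFE/eqP => ->; exists j; split => //; lia.
case=> j' [hj' e'].
have h1 : j.-1 < j' by apply: (N_lt_inv hp (r := Rm p)); lia.
have h2 : j' <= j.
  case: (ltnP j j') => // /(N_lt hp (Rm p)). lia.
have ej : j' = j by lia. subst j'.
apply/negbTE; rewrite negbK; apply/eqP; lia.
Qed.

Lemma main_N k : NN p (Rm p) k = G p 1 (code p k) + 2.
Proof.
elim: k {-2}k (leqnn k) => [|K IH] k hk.
  by have -> : k = 0 by lia.
case: (ltnP k K.+1) => hk'; first by apply: IH; lia.
have -> : k = K.+1 by lia.
have [vc ec] := code_ok hp K.
have [_ S1] := VS_incr hp vc.
rewrite NS (IH K (leqnn _)) [code p K.+1]/= S1.
suff : CC p (Rm p) K K.+1 = ~~ danger p (code p K).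
  by move=> ->; rewrite /maxd /nsons; case: (danger p (code p K)) => /=; lia.
rewrite -(ends1_incr hp vc) -/(code p K.+1).
have bi := black_iff (n := K.+1) isT. rewrite /= in bi.
have key : ends1 (code p K.+1) <-> exists j, 1 <= j /\ NN p (Rm p) j = K.+2.
  have [vK eK] := code_ok hp K.+1.
  split.
  - case E: (code p K.+1) => [|a [|b l]]; [by []|by case: a {E} => [|[|a]]|]. move=> H. have a1 : a = 1 by move: H {E}; case: a => [|[|a]]. subst a.
    rewrite E in vK eK. have vu : valid p (b :: l) by case/andP: vK.
    rewrite V_cons in eK.
    set j := G p 0 (b :: l).
    have ej : b :: l = code p j := code_unique hp vu.
    have j1 : 1 <= j by case: (posnP j) => // /(V_pos hp vu).
    have jl : j <= G p 1 (b :: l) by apply: G_mono.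
    exists j; split => //. rewrite (IH j); last by lia.
    rewrite -ej. lia.
  - case=> j [j1 ej].
    have jK : j <= K by have := N_ge hp (Rm p) j; lia.
    rewrite (IH j jK) in ej.
    have [vj Gj] := code_ok hp j.
    have vr : valid p (1 :: code p j).
      by rewrite /= vj /=; have := maxd_bnd hp (code p j); lia.
    have := code_unique hp vr. rewrite V_cons.
    have -> : 1 + G p 1 (code p j) = K.+1 by lia.
    move=> <-. case E: (code p j) => [|b l] //. by rewrite E G_nil in Gj; lia.
case h: (ends1 (code p K.+1)) => /=.
  by apply/bi/key.
case e: (CC p (Rm p) K K.+1) => //.
by have := proj2 key (proj1 bi e); rewrite h.
Qed.

End Main.

Section Final.
Variable p : nat.
Hypothesis hp : 5 <= p.

Lemma rho_agree K : (forall n, CC p (asg (rho p)) K n = CC p (Rm p) K n) /\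
  NN p (asg (rho p)) K = NN p (Rm p) K.
Proof. by apply: agree. Qed.

Lemma code_of nu w : nzm_code p nu w -> w != [::] /\ rev w = code p nu.
Proof.
case=> /(word_valid hp) [wne vw] e; split => //.
have := nzm_val_G p (rev w). rewrite revK e => ->.
exact: code_unique.
Qed.

Lemma succ_val w : nzm_val p (rcons w 1) = (G p 1 (rev w)).+1.
Proof. by rewrite -(revK (rcons w 1)) rev_rcons nzm_val_G V_cons add1n. Qed.

Lemma NSm nu : 1 <= nu ->
  NN p (Rm p) nu = NN p (Rm p) nu.-1 + nsons p (CC p (Rm p) nu.-1 nu).
Proof. by move=> h; have := NS p (Rm p) nu.-1; rewrite prednK. Qed.

Lemma wson_rho nu s : 1 <= nu ->
  (wson p (asg (rho p)) nu s <-> NN p (Rm p) nu.-1 <= s < NN p (Rm p) nu).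
Proof.
move=> h. rewrite /wson.
change (wfirst p (asg (rho p)) nu) with (NN p (asg (rho p)) nu.-1).
change (wcolor p (asg (rho p)) nu) with (CC p (asg (rho p)) nu.-1 nu).
have [h1 h2] := rho_agree nu.-1. rewrite h1 h2 (NSm h).
split; [by case | by move=> ?; split].
Qed.

Lemma code_word nu : 1 <= nu -> nzm_code p nu (rev (code p nu)).
Proof.
move=> h. have [v e] := code_ok hp nu. split.
  apply/(word_valid hp); rewrite revK; split => //.
  rewrite -size_eq0 size_rev size_eq0; case E: (code p nu) => [|b l] //; rewrite E G_nil in e; lia.
by rewrite nzm_val_G.
Qed.

End Final.

Theorem theorem9 (p : nat) (hp : 5 <= p) :
  (forall nu, 1 <= nu ->
     (exists w, nzm_code p nu w) /\
     (forall w, nzm_code p nu w ->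
        wson p (asg (rho p)) nu (nzm_val p (rcons w 1)) /\
        (forall s w', wson p (asg (rho p)) nu s ->
           s <> nzm_val p (rcons w 1) -> nzm_code p s w' -> last 0 w' <> 1)))
  /\
  (forall alpha : nat -> nat, valid_assignment p alpha ->
     (forall nu w, 1 <= nu -> nzm_code p nu w ->
        wson p (asg alpha) nu (nzm_val p (rcons w 1))) ->
     forall nu, 1 <= nu -> alpha nu = rho p nu).
Proof.
split.
  move=> nu hnu. split; first by exists (rev (code p nu)); exact: code_word.
  move=> w hw. have [wne ew] := code_of hp hw.
  rewrite succ_val ew. have hm := main_N hp nu.
  have hlt := N_lt hp (Rm p) (i := nu.-1) (j := nu) ltac:(lia).
  have hge := N_ge hp (Rm p) nu.
  split; first by apply/(wson_rho p _ hnu); lia.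
  move=> s w' /(wson_rho p _ hnu) hs hne hw' hl.
  have [w'ne ew'] := code_of hp hw'.
  move: hl ew' w'ne; case/lastP: w' {hw'} => [|u a] //.
  rewrite last_rcons => -> ; rewrite rev_rcons => ew' _.
  have [vs es] := code_ok hp s. rewrite -ew' V_cons in es.
  rewrite -ew' in vs. have vu : valid p (rev u) by case/andP: vs.
  case E: (rev u) => [|b l].
    rewrite E G_nil in es. have := N_ge hp (Rm p) nu.-1. lia.
  set j := G p 0 (rev u).
  have ej := code_unique hp vu. rewrite -/j in ej.
  have j1 : 1 <= j.
    case: (posnP j) => // hj0. by move: (V_pos hp vu hj0); rewrite E => /eqP.
  have := main_N hp j. rewrite -ej => hj.
  have h1 : nu.-1 < j by apply: (N_lt_inv hp (r := Rm p)); lia.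
  have h2 : j < nu by apply: (N_lt_inv hp (r := Rm p)); lia.
  lia.
move=> alpha va hsucc.
suff H : forall K k, 1 <= k <= K -> alpha k = rho p k.
  by move=> nu hnu; apply: (H nu); rewrite hnu leqnn.
elim=> [|K IH] k hk; first by lia.
case: (ltnP k K.+1) => hk'; first by apply: IH; lia.
have ek : k = K.+1 by lia. subst k.
have [ag1 ag2] := agree (p := p) (r1 := asg alpha) (r2 := Rm p) (K := K)
   (fun i hi => IH i hi).
set F := NN p (Rm p) K.
set c := nsons p (CC p (Rm p) K K.+1).
have erho : rho p K.+1 = c by [].
have hva := va K.+1 isT.
have hc : nsons p (wcolor p (asg alpha) K.+1) = c.
  by change (nsons p (CC p (asg alpha) K K.+1) = c); rewrite ag1.
rewrite hc in hva. rewrite erho.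
case: (ltnP (alpha K.+1) c) => hac; last by lia.
exfalso.
set q := F + alpha K.+1 - 1.
have hFK := N_ge hp (Rm p) K.
have hc2 := nsons_ge2 hp (CC p (Rm p) K K.+1).
have NA : NN p (asg alpha) K.+1 = F + c by rewrite NS ag2 ag1.
have NR : NN p (Rm p) K.+1 = F + c by rewrite NS.
have CA i : CC p (asg alpha) K.+1 i =
   if (F <= i) && (i < F + c) then i != q else CC p (Rm p) K i.
  by rewrite CS ag2 !ag1.
have CR i : CC p (Rm p) K.+1 i =
   if (F <= i) && (i < F + c) then i != F + c - 1 else CC p (Rm p) K i.
  by rewrite CS.
have hq1 : K.+1 <= q.-1 by lia.
have sh : NN p (asg alpha) (K.+1 + (q.-1 - K.+1)) = NN p (Rm p) (K.+1 + (q.-1 - K.+1)).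
  apply: (shift (B := q)) => //; first lia; first by rewrite NA; lia.
    move=> i hi. rewrite CA CR.
    case: andP => // -[h1 h2]. apply/esym. 
    by apply/idP/idP => _; apply/eqP; lia.
  by rewrite NA NR.
have eq1 : K.+1 + (q.-1 - K.+1) = q.-1 by lia.
rewrite eq1 in sh.
have cA : CC p (asg alpha) q.-1 q = false.
  rewrite -eq1 C_final //; last by rewrite NA; lia.
  rewrite CA. case: andP => [_|[]]; last by split; lia.
  by rewrite eqxx.
have cR : CC p (Rm p) q.-1 q = true.
  rewrite -eq1 C_final //; last by rewrite NR; lia.
  rewrite CR. case: andP => [_|[]]; last by split; lia.
  by apply/eqP; lia.
have hq : 1 <= q by lia.
have := hsucc q (rev (code p q)) hq (code_word hp hq).
rewrite succ_val revK /wson.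
change (wfirst p (asg alpha) q) with (NN p (asg alpha) q.-1).
change (wcolor p (asg alpha) q) with (CC p (asg alpha) q.-1 q).
rewrite cA sh.
have := main_N hp q. rewrite (NSm p hq) cR /nsons /=.
lia.
Qed.
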